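(* Let $a>0$, $u\neq 0$, $\lambda>0$ and $S$ a positive integer, and for $\gamma\in\mathbb{R}$ write $k:=a+\gamma$. On the set $I:=\{\gamma\in\mathbb{R}: 2k-\lambda[k^2+\tfrac2Sa^2]>0\}$ consider the (one-dimensional) expected test loss $$L_{\rm test}(\gamma)=\frac{a\gamma^2}{2k}\cdot\frac{2-\lambda k}{2k-\lambda\left[k^2+\frac2Sa^2\right]}\,u^2.$$ Then there exist $a$, $\lambda$ and $S$ such that $I$ is nonempty and the minimizer $\gamma^*=\arg\min_{\gamma\in I}L_{\rm test}(\gamma)$ satisfies $\gamma^*<0$.
   Context: This is the one-dimensional $L_2$-regularized linear regression trained by plain SGD with learning rate $\lambda$ and batch size $S$: inputs $x\sim\mathcal N(0,a)$, labels $y=ux$, loss $\frac12 a(w-u)^2+\frac12\gamma w^2$ with weight decay $\gamma$; $L_{\rm test}=\frac12 a\,\mathbb{E}_w[(w-u)^2]$ over the stationary distribution, which is finite exactly on $I$, where it is given by the displayed formula. *)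

(* Defs.v *)
From Stdlib Require Import Reals.
Open Scope R_scope.

Definition kk (a gamma : R) : R := a + gamma.

Definition inI (a lam : R) (S : nat) (gamma : R) : Prop :=
  2 * kk a gamma - lam * ((kk a gamma) ^ 2 + 2 / INR S * a ^ 2) > 0.

Definition Ltest (a u lam : R) (S : nat) (gamma : R) : R :=
  a * gamma ^ 2 / (2 * kk a gamma)
  * ((2 - lam * kk a gamma)
     / (2 * kk a gamma - lam * ((kk a gamma) ^ 2 + 2 / INR S * a ^ 2)))
  * u ^ 2.

Definition is_argmin_I (a u lam : R) (S : nat) (gamma : R) : Prop :=
  inI a lam S gamma /\
  forall g, inI a lam S g -> Ltest a u lam S gamma <= Ltest a u lam S g.

(* Main.v *)
Require Import Defs.
From Stdlib Require Import Reals Lra Psatz.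
Open Scope R_scope.

Lemma inI_iff (g : R) : inI 1 3 36 g <-> 2*(1+g) - 3*(1+g)^2 - 1/6 > 0.
Proof.
  unfold inI, kk. replace (INR 36) with 36 by (simpl; ring).
  split; intro H; lra.
Qed.

Lemma Lval (u g : R) : 2*(1+g) - 3*(1+g)^2 - 1/6 > 0 -> 0 < 1+g ->
  Ltest 1 u 3 36 g = u^2 * (g^2*(2-3*(1+g))) / (2*(1+g)*(2*(1+g) - 3*(1+g)^2 - 1/6)).
Proof.
  intros H Hk. unfold Ltest, kk. replace (INR 36) with 36 by (simpl; ring).
  field. split; lra.
Qed.

Lemma kpos g : 2*(1+g) - 3*(1+g)^2 - 1/6 > 0 -> 0 < 1+g /\ 1+g < 1.
Proof. intro H. split; nra. Qed.

Lemma key u g : 2*(1+g) - 3*(1+g)^2 - 1/6 > 0 ->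
  Ltest 1 u 3 36 (-1/2) <= Ltest 1 u 3 36 g.
Proof.
  intro H. destruct (kpos g H) as [Hk Hk1].
  assert (H0 : 2*(1+-1/2) - 3*(1+-1/2)^2 - 1/6 > 0) by lra.
  rewrite (Lval u g H Hk), (Lval u (-1/2) H0 ltac:(lra)).
  set (k := 1+g) in *. set (D := 2*k - 3*k^2 - 1/6) in *.
  assert (HD : 0 < 2*k*D) by (unfold D in *; nra).
  assert (Hu : 0 <= u^2) by nra.
  replace (u ^ 2 * ((-1/2) ^ 2 * (2 - 3 * (1 + -1/2))) /
   (2 * (1 + -1/2) * (2 * (1 + -1/2) - 3 * (1 + -1/2) ^ 2 - 1 / 6))) with (u^2 * (3/2)) by field.
  unfold Rdiv. rewrite Rmult_assoc. apply Rmult_le_compat_l; auto.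
  apply (Rmult_le_reg_r (2*k*D)); auto.
  replace (g ^ 2 * (2 - 3 * k) * / (2 * k * D) * (2 * k * D)) with (g ^ 2 * (2 - 3 * k)) by (field; lra).
  assert (Hg : g = k - 1) by (unfold k; ring). unfold D in *. clearbody k. rewrite Hg.
  assert (E : (k-1)^2*(2-3*k) - 3/2*(2*k*(2*k-3*k^2-1/6)) = (k-1/2)^2*(12*k+16)/2).
  { field. }
  assert (0 <= (k-1/2)^2*(12*k+16)/2).
  { apply Rmult_le_pos; [apply Rmult_le_pos|]; [apply pow2_ge_0|lra|lra]. }
  lra.
Qed.

Theorem corollary1 :
  forall u : R, u <> 0 ->
  exists (a lam : R) (S : nat),
    0 < a /\ 0 < lam /\ (0 < S)%nat /\
    (exists g, inI a lam S g) /\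
    (exists gstar, is_argmin_I a u lam S gstar /\ gstar < 0) /\
    (forall gstar, is_argmin_I a u lam S gstar -> gstar < 0).
Proof.
  intros u hu. exists 1, 3, 36%nat.
  split; [lra|]. split; [lra|]. split; [lia|].
  split; [exists (-1/2); apply inI_iff; lra|].
  split.
  - exists (-1/2). split; [|lra]. split; [apply inI_iff; lra|].
    intros g Hg. apply inI_iff in Hg. apply key; auto.
  - intros gs [Hg _]. apply inI_iff in Hg. destruct (kpos gs Hg). lra.
Qed.
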